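(* Let $r,s$ be positive integers, let $u<v<w$ be three points of $\mathbb{Z}^2$ in the same equivalence class, and let $P$ be a lattice path. Suppose that $P$ passes strictly west of $u$, weakly east of $v$, and weakly west of $w$. Then $P$ is invalid.
   Context: A lattice path is a path in $\mathbb{Z}^2$ consisting of unit steps north ($N$-steps, adding $(0,1)$) and east ($E$-steps, adding $(1,0)$). For fixed positive integers $r,s$, points $v,w\in\mathbb{Z}^2$ are equivalent if $v-w=\ell(r,s)$ for some $\ell\in\mathbb{Z}$; $[v]$ denotes the class of $v$. A lattice path $P$ is valid if whenever $P$ enters a point $v$ with an $E$-step, every later point of $P$ in $[v]$ is also entered by an $E$-step; otherwise it is invalid. $\mathbb{Z}^2$ is partially ordered componentwise: $(x,y)\le(x',y')$ iff $x\le x'$ and $y\le y'$ (and $<$ means $\le$ and $\neq$). A path $P$ passes strictly west of a point $v$ if there is a point $v'$ of $P$ with the same $y$-coordinate as $v$ and $v'<v$. $P$ passes weakly west of $v$ if $P$ has at least one point with the same $y$-coordinate as $v$ and every such point $v'$ satisfies $v'\le v$. $P$ passes weakly east of $v$ if $P$ has at least one point with the same $y$-coordinate as $v$ and every such point $v'$ satisfies $v'\ge v$. *)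

(* Defs.v *)
From Stdlib Require Import ZArith List Lia.
Open Scope Z_scope.

Inductive step := Nstep | Estep.

Definition point := (Z * Z)%type.

Definition move (p : point) (st : step) : point :=
  match st with
  | Nstep => (fst p, snd p + 1)
  | Estep => (fst p + 1, snd p)
  end.

Record lpath := LPath { start : point ; steps : list step }.

Fixpoint pts_from (p : point) (l : list step) : list point :=
  match l with
  | nil => p :: nil
  | st :: l' => p :: pts_from (move p st) l'
  end.

Definition points (P : lpath) : list point := pts_from (start P) (steps P).

Definition pt (P : lpath) (i : nat) : point := nth i (points P) (0, 0).

Definition entered_by_E (P : lpath) (i : nat) : Prop :=
  (1 <= i)%nat /\ nth_error (steps P) (i - 1) = Some Estep.

Definition equivZ (r s : Z) (v w : point) : Prop :=
  exists l : Z, fst v - fst w = l * r /\ snd v - snd w = l * s.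

Definition valid (r s : Z) (P : lpath) : Prop :=
  forall i j : nat, (i < j)%nat -> (j <= length (steps P))%nat ->
    entered_by_E P i -> equivZ r s (pt P i) (pt P j) -> entered_by_E P j.

Definition invalid (r s : Z) (P : lpath) : Prop := ~ valid r s P.

Definition ple (v w : point) : Prop := fst v <= fst w /\ snd v <= snd w.
Definition plt (v w : point) : Prop := ple v w /\ v <> w.

Definition passes_strictly_west (P : lpath) (v : point) : Prop :=
  exists v', In v' (points P) /\ snd v' = snd v /\ plt v' v.

Definition passes_weakly_west (P : lpath) (v : point) : Prop :=
  (exists v', In v' (points P) /\ snd v' = snd v) /\
  (forall v', In v' (points P) -> snd v' = snd v -> ple v' v).

Definition passes_weakly_east (P : lpath) (v : point) : Prop :=
  (exists v', In v' (points P) /\ snd v' = snd v) /\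
  (forall v', In v' (points P) -> snd v' = snd v -> ple v v').

(* Main.v *)
Require Import Defs.
From Stdlib Require Import ZArith List.
From Stdlib Require Import Lia.
Open Scope Z_scope.

Lemma pure_core (L : Z -> Z) (Y0 Yn r s : Z) (hs : 0 < s)
  (HM : forall y, Y0 <= y -> y + 1 <= Yn -> L y <= L (y + 1))
  (HV : forall y, Y0 <= y -> y + s <= Yn ->
        ~ (0 < L (y + s) - r - L y <= L (y + 1) - L y))
  (A B y0 ux : Z) (hA : 1 <= A) (hB : 1 <= B) (hy0 : Y0 <= y0)
  (hyn : y0 + A * s + B * s <= Yn)
  (h0 : L y0 < ux) (h1 : ux + A * r <= L (y0 + A * s))
  (h2 : L (y0 + A * s + B * s) <= ux + A * r + B * r) : False.
Proof.
  assert (fwd : forall y, Y0 <= y -> 0 < L (y + s) - r - L y ->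
     forall d, 0 <= d -> y + d + s <= Yn -> 0 < L (y + d + s) - r - L (y + d)).
  { intros y Hy Hh d Hd.
    pattern d; apply natlike_ind; [ | | exact Hd].
    - intros _. rewrite Z.add_0_r. exact Hh.
    - intros x Hx IH Hr.
      assert (IH' := IH ltac:(lia)).
      assert (V := HV (y + x) ltac:(lia) ltac:(lia)).
      assert (M := HM (y + x + s) ltac:(lia) ltac:(lia)).
      replace (y + Z.succ x + s) with (y + x + s + 1) by lia.
      replace (y + Z.succ x) with (y + x + 1) by lia.
      lia. }
  assert (claimA : forall k, 0 <= k -> y0 + k * s <= Yn ->
     (exists j, 0 <= j < k /\ 0 < L (y0 + j * s + s) - r - L (y0 + j * s))
     \/ L (y0 + k * s) <= L y0 + k * r).
  { intros k Hk. pattern k; apply natlike_ind; [ | | exact Hk].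
    - intros _. right. rewrite !Z.mul_0_l, Z.add_0_r. lia.
    - intros x Hx IH Hr.
      rewrite Z.mul_succ_l in Hr.
      destruct (IH ltac:(nia)) as [[j [Hj1 Hj2]] | Hle].
      + left. exists j. split; [lia | exact Hj2].
      + destruct (Z_lt_le_dec 0 (L (y0 + x * s + s) - r - L (y0 + x * s))) as [Hp | Hn].
        * left. exists x. split; [lia | exact Hp].
        * right. rewrite !Z.mul_succ_l. rewrite Z.add_assoc. lia. }
  destruct (claimA A ltac:(lia) ltac:(nia)) as [[j0 [Hj1 Hj2]] | Hle]; [ | lia].
  set (y1 := y0 + A * s) in *.
  assert (pos : forall k, 0 <= k -> y1 + k * s + s <= Yn ->
      0 < L (y1 + k * s + s) - r - L (y1 + k * s)).
  { intros k Hk Hr.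
    assert (E : y0 + j0 * s + (y1 + k * s - (y0 + j0 * s)) = y1 + k * s) by ring.
    assert (F := fwd (y0 + j0 * s) ltac:(nia) Hj2 (y1 + k * s - (y0 + j0 * s))
                  ltac:(unfold y1; nia) ltac:(lia)).
    rewrite E in F. exact F. }
  assert (claimB : forall k, 0 <= k -> y1 + k * s + s <= Yn ->
      L y1 + k * r + r < L (y1 + k * s + s)).
  { intros k Hk. pattern k; apply natlike_ind; [ | | exact Hk].
    - intros Hr.
      assert (P0 := pos 0 ltac:(lia) Hr). replace (y1 + 0 * s) with y1 in * by ring. lia.
    - intros x Hx IH Hr.
      rewrite !Z.mul_succ_l in *.
      assert (IH' := IH ltac:(lia)).
      assert (P1 := pos (Z.succ x) ltac:(lia)).
      rewrite Z.mul_succ_l in P1.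
      specialize (P1 ltac:(lia)).
      replace (y1 + (x * s + s)) with (y1 + x * s + s) in * by ring.
      lia. }
  assert (C := claimB (B - 1) ltac:(lia)).
  replace (y1 + (B - 1) * s + s) with (y1 + B * s) in C by ring.
  specialize (C ltac:(lia)).
  replace ((B - 1) * r) with (B * r - r) in C by ring.
  lia.
Qed.

Lemma pts_len (l : list step) (p : point) : length (pts_from p l) = S (length l).
Proof. revert p; induction l; intros p; simpl; [reflexivity | rewrite IHl; reflexivity]. Qed.

Lemma pts_nth0 (l : list step) (p : point) d : nth 0 (pts_from p l) d = p.
Proof. destruct l; reflexivity. Qed.

Lemma pts_succ (l : list step) : forall p m st d, nth_error l m = Some st ->
  nth (S m) (pts_from p l) d = move (nth m (pts_from p l) d) st.
Proof.
  induction l as [|a l IH]; intros p m st d H; destruct m; simpl in *;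
    try discriminate.
  - inversion H; subst. apply pts_nth0.
  - apply IH. exact H.
Qed.

Definition Xc (P : lpath) (m : nat) : Z := fst (pt P m).
Definition Yc (P : lpath) (m : nat) : Z := snd (pt P m).
Definition nlen (P : lpath) : nat := length (steps P).

Lemma step_cases (P : lpath) (m : nat) : (m < nlen P)%nat ->
  (Xc P (S m) = Xc P m + 1 /\ Yc P (S m) = Yc P m /\ nth_error (steps P) m = Some Estep) \/
  (Xc P (S m) = Xc P m /\ Yc P (S m) = Yc P m + 1 /\ nth_error (steps P) m = Some Nstep).
Proof.
  intros Hm. unfold nlen in Hm.
  destruct (nth_error (steps P) m) as [st|] eqn:E.
  2:{ apply nth_error_None in E. lia. }
  unfold Xc, Yc, pt, points. rewrite (pts_succ _ _ _ _ _ E).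
  destruct st; [right | left];
    destruct (nth m (pts_from (start P) (steps P)) (0, 0)); simpl; auto.
Qed.

Lemma sumXY (P : lpath) (m : nat) : (m <= nlen P)%nat ->
  Xc P m + Yc P m = Xc P 0 + Yc P 0 + Z.of_nat m.
Proof.
  induction m; intros Hm; [lia|].
  destruct (step_cases P m ltac:(lia)) as [[H1 [H2 _]]|[H1 [H2 _]]];
    rewrite H1, H2; specialize (IHm ltac:(lia)); lia.
Qed.

Lemma Ymono (P : lpath) (m m' : nat) : (m <= m')%nat -> (m' <= nlen P)%nat ->
  Yc P m <= Yc P m'.
Proof.
  intros H; induction H; intros Hn; [lia|].
  specialize (IHle ltac:(lia)).
  destruct (step_cases P m0 ltac:(lia)) as [[H1 [H2 _]]|[H1 [H2 _]]]; lia.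
Qed.

Lemma stepE (P : lpath) (m : nat) : (m < nlen P)%nat -> Yc P (S m) = Yc P m ->
  nth_error (steps P) m = Some Estep.
Proof. intros Hm HY. destruct (step_cases P m Hm) as [[_ [_ H]]|[_ [H _]]]; [exact H | lia]. Qed.

Lemma stepN (P : lpath) (m : nat) : (m < nlen P)%nat -> Yc P m < Yc P (S m) ->
  nth_error (steps P) m = Some Nstep.
Proof. intros Hm HY. destruct (step_cases P m Hm) as [[_ [H _]]|[_ [_ H]]]; [lia | exact H]. Qed.

Fixpoint findY (f : nat -> Z) (y : Z) (m fuel : nat) : nat :=
  match fuel with
  | O => m
  | S fu => if Z.ltb (f m) y then findY f y (S m) fu else m
  end.

Lemma findY_spec (f : nat -> Z) (y : Z) (fuel : nat) : forall m,
  (m <= findY f y m fuel <= m + fuel)%nat /\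
  (forall j, (m <= j < findY f y m fuel)%nat -> f j < y) /\
  (findY f y m fuel = (m + fuel)%nat \/ y <= f (findY f y m fuel)).
Proof.
  induction fuel; intros m; simpl.
  - split; [lia|]. split; [intros; lia | left; lia].
  - destruct (Z.ltb_spec (f m) y) as [Hlt|Hge].
    + destruct (IHfuel (S m)) as [A [B C]].
      split; [lia|]. split.
      * intros j Hj. destruct (Nat.eq_dec j m); [subst; exact Hlt | apply B; lia].
      * destruct C as [C|C]; [left; lia | right; exact C].
    + split; [lia|]. split; [intros; lia | right; lia].
Qed.

Definition firstr (P : lpath) (y : Z) : nat := findY (Yc P) y 0 (nlen P).
Definition Lrow (P : lpath) (y : Z) : Z := Xc P (firstr P y).

Lemma first_spec (P : lpath) (y : Z) : Yc P 0 <= y <= Yc P (nlen P) ->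
  (firstr P y <= nlen P)%nat /\ Yc P (firstr P y) = y /\
  (forall j, (j < firstr P y)%nat -> Yc P j < y).
Proof.
  intros Hy. unfold firstr.
  destruct (findY_spec (Yc P) y (nlen P) 0) as [A [B C]].
  set (k := findY (Yc P) y 0 (nlen P)) in *.
  assert (Hk : y <= Yc P k).
  { destruct C as [C|C]; [rewrite C; simpl; lia | exact C]. }
  split; [lia|]. split.
  - destruct k as [|k'].
    + lia.
    + assert (B' := B k' ltac:(lia)).
      destruct (step_cases P k' ltac:(lia)) as [[_ [H _]]|[_ [H _]]]; lia.
  - intros j Hj. apply B. lia.
Qed.

Lemma Lrow_formula (P : lpath) (y : Z) : Yc P 0 <= y <= Yc P (nlen P) ->
  Lrow P y = Xc P 0 + Yc P 0 + Z.of_nat (firstr P y) - y.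
Proof.
  intros Hy. destruct (first_spec P y Hy) as [A [B _]].
  unfold Lrow. assert (S := sumXY P (firstr P y) A). lia.
Qed.

Lemma first_lt (P : lpath) (y y' : Z) : Yc P 0 <= y -> y < y' -> y' <= Yc P (nlen P) ->
  (firstr P y < firstr P y')%nat.
Proof.
  intros H1 H2 H3.
  destruct (first_spec P y ltac:(lia)) as [A [B _]].
  destruct (first_spec P y' ltac:(lia)) as [A' [B' _]].
  destruct (Nat.lt_ge_cases (firstr P y) (firstr P y')) as [h|h]; [exact h|].
  assert (M := Ymono P _ _ h A). lia.
Qed.

Lemma HM_lem (P : lpath) (y : Z) : Yc P 0 <= y -> y + 1 <= Yc P (nlen P) ->
  Lrow P y <= Lrow P (y + 1).
Proof.
  intros H1 H2.
  assert (F := first_lt P y (y + 1) H1 ltac:(lia) H2).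
  rewrite (Lrow_formula P y ltac:(lia)), (Lrow_formula P (y + 1) ltac:(lia)). lia.
Qed.

Lemma HV_lem (r s : Z) (P : lpath) (hr : 0 < r) (hs : 0 < s) (Hval : valid r s P)
  (y : Z) : Yc P 0 <= y -> y + s <= Yc P (nlen P) ->
  ~ (0 < Lrow P (y + s) - r - Lrow P y <= Lrow P (y + 1) - Lrow P y).
Proof.
  intros H1 H2 [Hd1 Hd2].
  destruct (first_spec P y ltac:(lia)) as [A0 [B0 C0]].
  destruct (first_spec P (y + 1) ltac:(lia)) as [A1 [B1 C1]].
  destruct (first_spec P (y + s) ltac:(lia)) as [Aj [Bj Cj]].
  assert (F01 := first_lt P y (y + 1) H1 ltac:(lia) ltac:(lia)).
  assert (F0j := first_lt P y (y + s) H1 ltac:(lia) ltac:(lia)).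
  assert (Lf0 := Lrow_formula P y ltac:(lia)).
  assert (Lf1 := Lrow_formula P (y + 1) ltac:(lia)).
  remember (Lrow P (y + s) - r - Lrow P y) as d eqn:Hd.
  remember (firstr P y) as f0 eqn:Hf0. remember (firstr P (y + 1)) as f1 eqn:Hf1.
  remember (firstr P (y + s)) as j eqn:Hj.
  remember ((f0 + Z.to_nat d)%nat) as k eqn:Hkd.
  assert (Hk1 : (f0 < k)%nat) by lia.
  assert (Hk2 : (k < f1)%nat) by lia.
  assert (Yk : Yc P k = y).
  { assert (M := Ymono P f0 k ltac:(lia) ltac:(lia)). assert (C := C1 k Hk2). lia. }
  assert (Yk' : Yc P (k - 1) = y).
  { assert (M := Ymono P f0 (k - 1) ltac:(lia) ltac:(lia)). assert (C := C1 (k - 1)%nat ltac:(lia)). lia. }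
  assert (Xk : Xc P k = Lrow P (y + s) - r).
  { assert (S := sumXY P k ltac:(lia)).
    lia. }
  assert (Hkj : (k < j)%nat).
  { destruct (Nat.lt_ge_cases k j) as [h|h]; [exact h|].
    assert (M := Ymono P j k h ltac:(lia)). lia. }
  assert (EEk : entered_by_E P k).
  { split; [lia|]. apply stepE; [lia|]. replace (S (k - 1)) with k by lia. lia. }
  assert (Eq : equivZ r s (pt P k) (pt P j)).
  { exists (-1). unfold Lrow in Xk. rewrite <- Hj in Xk. unfold Xc, Yc in *. lia. }
  assert (EEj := Hval k j Hkj Aj EEk Eq).
  destruct EEj as [Ej1 Ej2].
  assert (N := stepN P (j - 1) ltac:(unfold nlen in *; lia)).
  replace (S (j - 1)) with j in N by lia.
  assert (C := Cj (j - 1)%nat ltac:(lia)).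
  specialize (N ltac:(lia)). rewrite N in Ej2. discriminate.
Qed.

Lemma In_pt (P : lpath) (q : point) : In q (points P) ->
  exists m, (m <= nlen P)%nat /\ pt P m = q.
Proof.
  intros H. destruct (In_nth _ _ (0, 0) H) as [m [Hm E]].
  unfold points in Hm. rewrite pts_len in Hm.
  exists m. split; [unfold nlen; lia | exact E].
Qed.

Lemma pt_In (P : lpath) (m : nat) : (m <= nlen P)%nat -> In (pt P m) (points P).
Proof.
  intros H. unfold pt. apply nth_In. unfold points. rewrite pts_len. unfold nlen in H. lia.
Qed.

Lemma row_range (P : lpath) (m : nat) : (m <= nlen P)%nat ->
  Yc P 0 <= Yc P m <= Yc P (nlen P).
Proof. intros H. split; apply Ymono; lia. Qed.

Theorem mainTheorem3 (r s : Z) (hr : 0 < r) (hs : 0 < s)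
  (u v w : point) (P : lpath)
  (huv : plt u v) (hvw : plt v w)
  (Euv : equivZ r s u v) (Evw : equivZ r s v w)
  (Hu : passes_strictly_west P u)
  (Hv : passes_weakly_east P v)
  (Hw : passes_weakly_west P w) :
  invalid r s P.
Proof.
  intros Hval.
  destruct u as [ux uy], v as [vx vy], w as [wx wy].
  destruct Euv as [a [Ea1 Ea2]], Evw as [b [Eb1 Eb2]].
  destruct huv as [[Hu1 Hu2] Huv], hvw as [[Hv1 Hv2] Hvw]. simpl in *.
  assert (ha : a < 0).
  { destruct (Z_lt_le_dec a 0) as [h|h]; [exact h|].
    destruct (Z.eq_dec a 0) as [e|e].
    - subst a. exfalso. apply Huv. f_equal; lia.
    - nia. }
  assert (hb : b < 0).
  { destruct (Z_lt_le_dec b 0) as [h|h]; [exact h|].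
    destruct (Z.eq_dec b 0) as [e|e].
    - subst b. exfalso. apply Hvw. f_equal; lia.
    - nia. }
  destruct Hu as [p [Hp1 [Hp2 [[Hp3 Hp4] Hp5]]]].
  destruct (In_pt P p Hp1) as [mp [Hmp Emp]].
  assert (Hpx : fst p < ux).
  { destruct p as [px py]; simpl in *. destruct (Z.eq_dec px ux); [|lia].
    exfalso; apply Hp5; f_equal; auto. }
  destruct Hv as [[q [Hq1 Hq2]] Hv].
  destruct (In_pt P q Hq1) as [mq [Hmq Emq]].
  destruct Hw as [[z [Hz1 Hz2]] Hw].
  destruct (In_pt P z Hz1) as [mz [Hmz Emz]].
  assert (R0 := row_range P mp Hmp).
  assert (R2 := row_range P mz Hmz).
  assert (Yp : Yc P mp = uy) by (unfold Yc; rewrite Emp; exact Hp2).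
  assert (Yz : Yc P mz = wy) by (unfold Yc; rewrite Emz; exact Hz2).
  assert (L0 : Lrow P uy < ux).
  { destruct (first_spec P uy ltac:(lia)) as [A [B C]].
    assert (Hle : (firstr P uy <= mp)%nat).
    { destruct (Nat.le_gt_cases (firstr P uy) mp) as [h|h]; [exact h|].
      specialize (C mp h). lia. }
    assert (S1 := sumXY P mp Hmp).
    assert (Lf := Lrow_formula P uy ltac:(lia)).
    assert (Xp : Xc P mp = fst p) by (unfold Xc; rewrite Emp; reflexivity).
    lia. }
  assert (L1 : vx <= Lrow P vy).
  { destruct (first_spec P vy ltac:(lia)) as [A [B C]].
    assert (H := Hv (pt P (firstr P vy)) (pt_In P _ A) B).
    destruct H as [H _]. unfold Lrow, Xc. simpl in H. exact H. }
  assert (L2 : Lrow P wy <= wx).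
  { destruct (first_spec P wy ltac:(lia)) as [A [B C]].
    assert (H := Hw (pt P (firstr P wy)) (pt_In P _ A) B).
    destruct H as [H _]. unfold Lrow, Xc. simpl in H. exact H. }
  apply (pure_core (Lrow P) (Yc P 0) (Yc P (nlen P)) r s hs
           (HM_lem P) (HV_lem r s P hr hs Hval) (-a) (-b) uy ux
           ltac:(lia) ltac:(lia) ltac:(lia)).
  - replace (uy + - a * s + - b * s) with wy by lia. lia.
  - exact L0.
  - replace (uy + - a * s) with vy by lia. lia.
  - replace (uy + - a * s + - b * s) with wy by lia. lia.
Qed.
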